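(* Let $a<b$, let $N\ge1$ and $T\ge1$. For a probability distribution function $F$ on $[a,b]$ and $y\in[a,b]$ let $\mathrm{CRPS}(F,y)=\int_a^b(F(u)-H(u-y))^2\,du$, where $H(x)=0$ for $x<0$ and $H(x)=1$ for $x\ge0$. Consider the online protocol: set $w_{i,1}=\frac1N$ for $1\le i\le N$; for $t=1,\dots,T$: experts $i=1,\dots,N$ announce probability distribution functions $F_{i,t}$ on $[a,b]$; the learner announces $$F_t(u)=\frac12-\frac14\ln\frac{\sum_{i=1}^N w^*_{i,t}e^{-2(F_{i,t}(u))^2}}{\sum_{i=1}^N w^*_{i,t}e^{-2(1-F_{i,t}(u))^2}},\qquad w^*_{i,t}=\frac{w_{i,t}}{\sum_{j=1}^N w_{j,t}};$$ an outcome $y_t\in[a,b]$ is revealed (arbitrarily, possibly adversarially); and the weights are updated by $w_{i,t+1}=w_{i,t}\,e^{-\frac{2}{b-a}\mathrm{CRPS}(F_{i,t},y_t)}$. Then for every $1\le i\le N$, $$\sum_{t=1}^T\mathrm{CRPS}(F_t,y_t)\le\sum_{t=1}^T\mathrm{CRPS}(F_{i,t},y_t)+\frac{b-a}{2}\ln N.$$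
   Context: A probability distribution function on $[a,b]$ is a non-decreasing function $F:[a,b]\to[0,1]$ with $F(a)=0$, $F(b)=1$, left-continuous and having a right limit at each point. *)

(* Defs.v *)
From Stdlib Require Import Reals Lra.
From Coquelicot Require Import Coquelicot.
Open Scope R_scope.

Fixpoint sumR (n : nat) (f : nat -> R) : R :=
  match n with
  | O => 0
  | S m => sumR m f + f m
  end.

(* Probability distribution function on [a,b]: non-decreasing, F a = 0,
   F b = 1, values in [0,1], left-continuous and with a right limit at each
   point of [a,b] (left-continuity at a and right limit at b are vacuous
   relative to [a,b]). *)
Definition is_distribution (a b : R) (F : R -> R) : Prop :=
  (forall u v, a <= u -> u <= v -> v <= b -> F u <= F v) /\
  (forall u, a <= u <= b -> 0 <= F u <= 1) /\
  F a = 0 /\ F b = 1 /\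
  (forall x, a < x <= b -> filterlim F (at_left x) (locally (F x))) /\
  (forall x, a <= x < b -> exists l : R, filterlim F (at_right x) (locally l)).

Definition Heav (x : R) : R := if Rlt_dec x 0 then 0 else 1.

Definition CRPS (a b : R) (F : R -> R) (y : R) : R :=
  RInt (fun u => (F u - Heav (u - y)) ^ 2) a b.

(* Expert predictions: Fexp i t is F_{i+1,t+1}; outcomes: y t is y_{t+1}.
   weight a b N Fexp y i t is w_{i+1,t+1}. *)
Fixpoint weight (a b : R) (N : nat) (Fexp : nat -> nat -> R -> R) (y : nat -> R)
  (i t : nat) : R :=
  match t with
  | O => 1 / INR N
  | S s => weight a b N Fexp y i s * exp (- (2 / (b - a)) * CRPS a b (Fexp i s) (y s))
  end.

Definition wstar (a b : R) (N : nat) (Fexp : nat -> nat -> R -> R) (y : nat -> R)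
  (i t : nat) : R :=
  weight a b N Fexp y i t / sumR N (fun j => weight a b N Fexp y j t).

Definition learner (a b : R) (N : nat) (Fexp : nat -> nat -> R -> R) (y : nat -> R)
  (t : nat) (u : R) : R :=
  1 / 2 - 1 / 4 * ln (sumR N (fun i => wstar a b N Fexp y i t * exp (-2 * (Fexp i t u) ^ 2))
                      / sumR N (fun i => wstar a b N Fexp y i t * exp (-2 * (1 - Fexp i t u) ^ 2))).

(* Main.v *)
Require Import Defs.
From Stdlib Require Import Reals Lra Lia List RList RiemannInt_SF RiemannInt ZArith.
From Coquelicot Require Import Coquelicot.
Open Scope R_scope.


Lemma Int_part_unique (r : R) (k : Z) : IZR k <= r < IZR k + 1 -> Int_part r = k.
Proof.
  intros [H1 H2]. destruct (base_Int_part r) as [H3 H4].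
  assert (Ha : (Int_part r < k + 1)%Z).
  { apply lt_IZR. rewrite plus_IZR. simpl. lra. }
  assert (Hb : (k < Int_part r + 1)%Z).
  { apply lt_IZR. rewrite plus_IZR. simpl. lra. }
  lia.
Qed.

Lemma pos_Rl_map_seq (g : nat -> R) (m s i : nat) :
  (i < m)%nat -> pos_Rl (map g (seq s m)) i = g (s + i)%nat.
Proof.
  revert s i. induction m as [|m IH]; intros s i Hi; [lia|].
  destruct i as [|i]; simpl.
  - f_equal; lia.
  - rewrite IH by lia. f_equal; lia.
Qed.

Lemma Int_SF_tele (f : R -> R) (X : nat -> R) (d : R) (n : nat) :
  (forall k, X (S k) - X k = d) ->
  (forall k, (k < n)%nat -> f (X k) <= f (X (S k))) ->
  forall m s, (s + m <= n)%nat ->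
  Int_SF (map (fun k => Rabs (f (X (S k)) - f (X k))) (seq s m)) (map X (seq s (S m)))
  = d * (f (X (s + m)%nat) - f (X s)).
Proof.
  intros HX Hf m. induction m as [|m IH]; intros s Hs.
  - simpl. rewrite Nat.add_0_r. ring.
  - change (seq s (S (S m))) with (s :: seq (S s) (S m)).
    change (seq s (S m)) with (s :: seq (S s) m).
    simpl map. change (X (S s) :: map X (seq (S (S s)) m)) with (map X (seq (S s) (S m))).
    cbn [Int_SF].
    destruct m as [|m'].
    + simpl. rewrite Nat.add_1_r. rewrite HX. rewrite Rabs_right.
      2: { assert (H := Hf s ltac:(lia)). lra. }
      ring.
    + change (map X (seq (S s) (S (S m')))) with (X (S s) :: map X (seq (S (S s)) (S m'))).
      cbn [Int_SF]. 
      change (X (S s) :: map X (seq (S (S s)) (S m'))) with (map X (seq (S s) (S (S m')))).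
      rewrite (IH (S s)) by lia.
      replace (S s + S m')%nat with (s + S (S m'))%nat by lia.
      rewrite HX. rewrite Rabs_right.
      2: { assert (H := Hf s ltac:(lia)). lra. }
      ring.
Qed.


Lemma mono_Riemann (f : R -> R) a b : a < b ->
  (forall u v, a <= u -> u <= v -> v <= b -> f u <= f v) -> Riemann_integrable f a b.
Proof.
  intros Hab Hf eps.
  set (r := (b - a) * (f b - f a) / eps).
  assert (Hfab : f a <= f b) by (apply Hf; lra).
  assert (Heps := cond_pos eps).
  assert (Hr : 0 <= r).
  { unfold r. apply Rmult_le_pos; [apply Rmult_le_pos; lra|].
    left; apply Rinv_0_lt_compat; lra. }
  destruct (archimed r) as [Hup _].
  set (n := Z.to_nat (up r)).
  assert (Hupp : (0 < up r)%Z) by (apply lt_IZR; simpl; lra).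
  assert (HnZ : Z.of_nat n = up r) by (unfold n; apply Z2Nat.id; lia).
  assert (HnR : INR n = IZR (up r)) by (rewrite INR_IZR_INZ, HnZ; reflexivity).
  assert (Hn0 : 0 < INR n) by (rewrite HnR; apply IZR_lt; lia).
  set (d := (b - a) / INR n).
  assert (Hd : 0 < d) by (unfold d; apply Rdiv_lt_0_compat; lra).
  set (X := fun k : nat => a + INR k * d).
  assert (HXn : X n = b) by (unfold X, d; field; lra).
  assert (HX0 : X 0%nat = a) by (unfold X; simpl; ring).
  set (kf := fun t => Int_part ((t - a) / d)).
  set (phi := fun t => f (a + IZR (kf t) * d)).
  set (psi := fun t => Rabs (f (a + (IZR (kf t) + 1) * d) - f (a + IZR (kf t) * d))).
  set (l := map X (seq 0 (S n))).
  set (lphi := map (fun k => f (X k)) (seq 0 n)).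
  set (lpsi := map (fun k => Rabs (f (X (S k)) - f (X k))) (seq 0 n)).
  assert (Hlen : length l = S n) by (unfold l; rewrite length_map, length_seq; reflexivity).
  assert (Hpos : forall i, (i <= n)%nat -> pos_Rl l i = X i).
  { intros i Hi. unfold l. rewrite pos_Rl_map_seq by lia. reflexivity. }
  assert (HXS : forall k, X (S k) = X k + d) by (intros k; unfold X; rewrite S_INR; ring).
  assert (Hq : forall t, (t - a) / d * d = t - a) by (intros; field; lra).
  assert (Hkf : forall i t, (i < n)%nat -> X i < t < X (S i) -> kf t = Z.of_nat i).
  { intros i t Hi Ht. unfold kf. apply Int_part_unique.
    rewrite <- INR_IZR_INZ. unfold X in Ht. rewrite S_INR in Ht.
    specialize (Hq t).
    split.
    - apply Rmult_le_reg_r with d; [lra|]. lra.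
    - apply Rmult_lt_reg_r with d; [lra|]. lra. }
  assert (Hord : ordered_Rlist l).
  { intros i Hi. rewrite Hlen in Hi. change (pred (S n)) with n in Hi. rewrite !Hpos by lia. rewrite HXS; lra. }
  assert (Hmin : Rmin a b = a) by (apply Rmin_left; lra).
  assert (Hmax : Rmax a b = b) by (apply Rmax_right; lra).
  assert (Hphi : adapted_couple phi a b l lphi).
  { split; [exact Hord|]. split; [rewrite Hpos by lia; rewrite HX0, Hmin; reflexivity|].
    split; [rewrite Hlen; change (pred (S n)) with n; rewrite Hpos by lia; rewrite HXn, Hmax; reflexivity|].
    split; [rewrite Hlen; unfold lphi; rewrite length_map, length_seq; reflexivity|].
    intros i Hi. rewrite Hlen in Hi; change (pred (S n)) with n in Hi.
    intros t Ht. unfold open_interval in Ht. rewrite !Hpos in Ht by lia.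
    unfold lphi. rewrite pos_Rl_map_seq by lia. simpl.
    unfold phi. rewrite (Hkf i t Hi Ht). rewrite <- INR_IZR_INZ. reflexivity. }
  assert (Hpsi : adapted_couple psi a b l lpsi).
  { split; [exact Hord|]. split; [rewrite Hpos by lia; rewrite HX0, Hmin; reflexivity|].
    split; [rewrite Hlen; change (pred (S n)) with n; rewrite Hpos by lia; rewrite HXn, Hmax; reflexivity|].
    split; [rewrite Hlen; unfold lpsi; rewrite length_map, length_seq; reflexivity|].
    intros i Hi. rewrite Hlen in Hi; change (pred (S n)) with n in Hi.
    intros t Ht. unfold open_interval in Ht. rewrite !Hpos in Ht by lia.
    unfold lpsi. rewrite pos_Rl_map_seq by lia. simpl.
    unfold psi. rewrite (Hkf i t Hi Ht). rewrite <- INR_IZR_INZ.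
    unfold X. rewrite S_INR. reflexivity. }
  exists (mkStepFun (existT _ l (existT _ lphi Hphi))).
  exists (mkStepFun (existT _ l (existT _ lpsi Hpsi))).
  split.
  - intros t Ht. rewrite Hmin, Hmax in Ht. simpl.
    destruct (Req_dec t b) as [Htb|Htb].
    + assert (Hk : kf t = Z.of_nat n).
      { unfold kf. apply Int_part_unique. rewrite <- INR_IZR_INZ.
        rewrite Htb. unfold d. split; [right; field; lra | ].
        replace ((b - a) / ((b - a) / INR n)) with (INR n) by (field; lra). lra. }
      unfold phi. rewrite Hk, <- INR_IZR_INZ. fold (X n). rewrite HXn, Htb.
      rewrite Rminus_diag, Rabs_R0. apply Rabs_pos.
    + set (k := kf t).
      destruct (base_Int_part ((t - a) / d)) as [Hk1 Hk2]. fold (kf t) in Hk1, Hk2. fold k in Hk1, Hk2.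
      assert (Hk0 : (0 <= k)%Z).
      { assert (IZR (-1) < IZR k). { specialize (Hq t). 
          assert (0 <= (t - a) / d). { apply Rmult_le_reg_r with d; [lra|]. lra. } simpl; lra. }
        apply lt_IZR in H. lia. }
      assert (Hkn : (k < Z.of_nat n)%Z).
      { apply lt_IZR. rewrite <- INR_IZR_INZ. specialize (Hq t).
        assert ((t - a) / d < INR n). { apply Rmult_lt_reg_r with d; [lra|]. rewrite Hq.
          unfold d. replace (INR n * ((b - a) / INR n)) with (b - a) by (field; lra). lra. }
        lra. }
      assert (Hk1' : IZR (k + 1) <= INR n).
      { rewrite INR_IZR_INZ. apply IZR_le. lia. }
      rewrite plus_IZR in Hk1'. simpl in Hk1'.
      unfold phi, psi. fold k.
      specialize (Hq t).
      assert (HA : f (a + IZR k * d) <= f t).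
      { apply Hf.
        - assert (0 <= IZR k) by (apply IZR_le; lia). nra.
        - apply Rmult_le_compat_r with (r := d) in Hk1; [|lra]. rewrite Hq in Hk1. lra.
        - lra. }
      assert (HB : f t <= f (a + (IZR k + 1) * d)).
      { apply Hf.
        - lra.
        - assert (Hk2' : (t - a) / d < IZR k + 1) by lra.
          apply Rmult_lt_compat_r with (r := d) in Hk2'; [|lra]. rewrite Hq in Hk2'. lra.
        - assert ((IZR k + 1) * d <= INR n * d) by (apply Rmult_le_compat_r; lra).
          unfold d in H at 2. replace (INR n * ((b - a) / INR n)) with (b - a) in H by (field; lra).
          lra. }
      rewrite !Rabs_right by lra. lra.
  - unfold RiemannInt_SF. simpl. destruct (Rle_dec a b) as [_|Hn]; [|lra].
    unfold subdivision_val, subdivision. simpl.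
    unfold lpsi, l.
    assert (HXd : forall k, X (S k) - X k = d) by (intros; rewrite HXS; ring).
    assert (HXm : forall k, (k < n)%nat -> f (X k) <= f (X (S k))).
    { intros k Hk. assert (INR (S k) <= INR n) by (apply le_INR; lia).
      assert (0 <= INR k) by apply pos_INR.
      assert (0 <= INR k * d) by (apply Rmult_le_pos; lra).
      rewrite S_INR in H.
      assert ((INR k + 1) * d <= INR n * d) by (apply Rmult_le_compat_r; lra).
      unfold d in H2 at 2. replace (INR n * ((b - a) / INR n)) with (b - a) in H2 by (field; lra).
      apply Hf; rewrite ?HXS; unfold X; lra. }
    rewrite (Int_SF_tele f X d n HXd HXm n 0) by lia.
    simpl. rewrite HXn, HX0.
    rewrite Rabs_right by (apply Rle_ge, Rmult_le_pos; lra).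
    unfold d. apply Rmult_lt_reg_r with (INR n); [lra|].
    replace ((b - a) / INR n * (f b - f a) * INR n) with ((b-a) * (f b - f a)) by (field; lra).
    apply Rmult_lt_compat_r with (r := pos eps) in Hup; [|lra].
    replace (r * eps) with ((b - a) * (f b - f a)) in Hup by (unfold r; field; lra).
    rewrite HnR, (Rmult_comm eps). exact Hup.
Qed.

Lemma mono_ex_RInt (f : R -> R) a b : a <= b ->
  (forall u v, a <= u -> u <= v -> v <= b -> f u <= f v) -> ex_RInt f a b.
Proof.
  intros Hab Hf. destruct (Req_dec a b) as [<-|Hne]; [apply ex_RInt_point|].
  apply ex_RInt_Reals_1, mono_Riemann; [lra|exact Hf].
Qed.


Lemma ex_RInt_ext_R (f g : R -> R) a b :
  (forall x, Rmin a b < x < Rmax a b -> f x = g x) -> ex_RInt f a b -> ex_RInt g a b.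
Proof. apply ex_RInt_ext. Qed.

Lemma crps_integrable (G : R -> R) a b y : a <= y <= b ->
  (forall u v, a <= u -> u <= v -> v <= b -> G u <= G v) ->
  (forall u, a <= u <= b -> 0 <= G u <= 1) ->
  ex_RInt (fun u => (G u - Heav (u - y))^2) a b.
Proof.
  intros Hy HG HG01.
  apply ex_RInt_Chasles with y.
  - apply ex_RInt_ext_R with (fun u => G u ^ 2).
    + intros x Hx. rewrite Rmin_left, Rmax_right in Hx by lra.
      unfold Heav. destruct (Rlt_dec (x - y) 0); [|lra]. ring.
    + apply mono_ex_RInt; [lra|]. intros u v Hu Huv Hv.
      assert (H1 := HG u v Hu Huv ltac:(lra)). assert (H2 := HG01 u ltac:(lra)).
      nra.
  - apply ex_RInt_ext_R with (fun u => opp (- ((G u - 1) ^ 2))).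
    + intros x Hx. rewrite Rmin_left, Rmax_right in Hx by lra.
      unfold Heav. destruct (Rlt_dec (x - y) 0); [lra|].
      change (opp (- ((G x - 1) ^ 2))) with (- - ((G x - 1) ^ 2)). ring.
    + apply (@ex_RInt_opp R_NormedModule (fun u => - ((G u - 1) ^ 2))). apply mono_ex_RInt; [lra|]. intros u v Hu Huv Hv.
      assert (H1 := HG u v ltac:(lra) Huv ltac:(lra)). assert (H2 := HG01 u ltac:(lra)).
      assert (H3 := HG01 v ltac:(lra)).
      nra.
Qed.


Lemma exp_le' x y : x <= y -> exp x <= exp y.
Proof. intros [H|H]; [left; apply exp_increasing; exact H| subst; right; reflexivity]. Qed.
Lemma ln_le' x y : 0 < x -> x <= y -> ln x <= ln y.
Proof. intros Hx [H|H]; [left; apply ln_increasing; auto| subst; right; reflexivity]. Qed.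

Section Hoef.
Variable g : R.
Hypothesis Hg : 0 <= g <= 1.

Let D s := 1 - g + g * exp s.
Lemma D_pos s : 0 < D s.
Proof. unfold D. assert (H := exp_pos s). nra. Qed.

Let h s := s ^ 2 / 8 + g * s - ln (D s).
Let h1 s := s / 4 + g - g * exp s / D s.
Let h2 s := / 4 - g * exp s * (1 - g) / (D s ^ 2).

Lemma h_der s : derivable_pt_lim h s (h1 s).
Proof.
  apply is_derive_Reals. unfold h, h1, D.
  assert (HD := D_pos s). unfold D in HD.
  auto_derive; [lra|]. field. lra.
Qed.

Lemma h1_der s : derivable_pt_lim h1 s (h2 s).
Proof.
  apply is_derive_Reals. unfold h1, h2, D.
  assert (HD := D_pos s). unfold D in HD.
  auto_derive; [lra|]. field. lra.
Qed.

Lemma h2_nonneg s : 0 <= h2 s.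
Proof.
  unfold h2. assert (HD := D_pos s). assert (He := exp_pos s).
  assert (H : g * exp s * (1 - g) / D s ^ 2 <= / 4).
  { apply Rmult_le_reg_r with (D s ^ 2). { apply pow_lt; lra. }
    unfold Rdiv. rewrite Rmult_assoc, Rinv_l by (apply pow_nonzero; lra).
    unfold D. assert (0 <= (1 - g - g * exp s) ^ 2) by apply pow2_ge_0. nra. }
  lra.
Qed.

Lemma h0 : h 0 = 0.
Proof. unfold h, D. rewrite exp_0. replace (1 - g + g * 1) with 1 by ring. rewrite ln_1. field. Qed.
Lemma h10 : h1 0 = 0.
Proof. unfold h1, D. rewrite exp_0. replace (1 - g + g * 1) with 1 by ring. field. Qed.

Lemma h_nonneg s : 0 <= h s.
Proof.
  destruct (Rtotal_order s 0) as [Hs|[Hs|Hs]].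
  - destruct (MVT_cor2 h h1 s 0 Hs (fun c _ => h_der c)) as [c [Hc1 Hc2]].
    destruct (MVT_cor2 h1 h2 c 0 (proj2 Hc2) (fun c _ => h1_der c)) as [c' [Hc'1 Hc'2]].
    rewrite h10 in Hc'1. assert (H2 := h2_nonneg c').
    assert (h1 c <= 0) by nra. rewrite h0 in Hc1. nra.
  - subst. rewrite h0. lra.
  - destruct (MVT_cor2 h h1 0 s Hs (fun c _ => h_der c)) as [c [Hc1 Hc2]].
    destruct (MVT_cor2 h1 h2 0 c (proj1 Hc2) (fun c _ => h1_der c)) as [c' [Hc'1 Hc'2]].
    rewrite h10 in Hc'1. assert (H2 := h2_nonneg c').
    assert (0 <= h1 c) by nra. rewrite h0 in Hc1. nra.
Qed.

Lemma hoeffding s : (1 - g) * exp (- g * s) + g * exp ((1 - g) * s) <= exp (s ^ 2 / 8).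
Proof.
  assert (H := h_nonneg s). unfold h in H.
  assert (HD := D_pos s).
  assert (H1 : D s <= exp (s ^ 2 / 8 + g * s)).
  { rewrite <- (exp_ln (D s)) by lra. apply exp_le'. lra. }
  replace ((1 - g) * exp (- g * s) + g * exp ((1 - g) * s)) with (exp (- g * s) * D s).
  2: { unfold D. replace ((1 - g) * s) with (- g * s + s) by ring. rewrite exp_plus. ring. }
  replace (s ^ 2 / 8) with (- g * s + (s ^ 2 / 8 + g * s)) by ring.
  rewrite exp_plus. apply Rmult_le_compat_l; [left; apply exp_pos | exact H1].
Qed.
End Hoef.


Lemma sumR_ext n f g : (forall i, (i < n)%nat -> f i = g i) -> sumR n f = sumR n g.
Proof. induction n; intros H; simpl; [reflexivity|]. rewrite IHn by (intros; apply H; lia). rewrite H by lia. reflexivity. Qed.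
Lemma sumR_le n f g : (forall i, (i < n)%nat -> f i <= g i) -> sumR n f <= sumR n g.
Proof. induction n; intros H; simpl; [lra|]. assert (H1 := H n ltac:(lia)). assert (sumR n f <= sumR n g) by (apply IHn; intros; apply H; lia). lra. Qed.
Lemma sumR_plus n f g : sumR n (fun i => f i + g i) = sumR n f + sumR n g.
Proof. induction n; simpl; [ring|]. rewrite IHn. ring. Qed.
Lemma sumR_scal n c f : sumR n (fun i => c * f i) = c * sumR n f.
Proof. induction n; simpl; [ring|]. rewrite IHn. ring. Qed.
Lemma sumR_nonneg n f : (forall i, (i < n)%nat -> 0 <= f i) -> 0 <= sumR n f.
Proof. induction n; intros H; simpl; [lra|]. assert (H1 := H n ltac:(lia)). assert (0 <= sumR n f) by (apply IHn; intros; apply H; lia). lra. Qed.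
Lemma sumR_pos n f : (0 < n)%nat -> (forall i, (i < n)%nat -> 0 < f i) -> 0 < sumR n f.
Proof.
  intros Hn H. destruct n; [lia|]. simpl.
  assert (0 <= sumR n f) by (apply sumR_nonneg; intros; left; apply H; lia).
  assert (H1 := H n ltac:(lia)). lra.
Qed.
Lemma sumR_ge_term n f i : (forall j, (j < n)%nat -> 0 <= f j) -> (i < n)%nat -> f i <= sumR n f.
Proof.
  induction n; intros H Hi; [lia|]. simpl.
  destruct (Nat.eq_dec i n) as [->|Hne].
  - assert (0 <= sumR n f) by (apply sumR_nonneg; intros; apply H; lia). lra.
  - assert (f i <= sumR n f) by (apply IHn; [intros; apply H; lia| lia]).
    assert (H1 := H n ltac:(lia)). lra.
Qed.

Lemma tangent_pt (g x : R) : 0 <= g <= 1 ->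
  (1 - g) * exp (-2 * (1 - g) ^ 2) * exp (-2 * x ^ 2)
  + g * exp (-2 * g ^ 2) * exp (-2 * (1 - x) ^ 2)
  <= exp (-2 * g ^ 2) * exp (-2 * (1 - g) ^ 2).
Proof.
  intros Hg.
  set (d := x - g).
  assert (E1 : exp (-2 * x ^ 2) = exp (-2 * g ^ 2) * exp (-2 * d ^ 2) * exp (- g * (4 * d))).
  { rewrite <- !exp_plus. f_equal. unfold d. ring. }
  assert (E2 : exp (-2 * (1 - x) ^ 2) = exp (-2 * (1 - g) ^ 2) * exp (-2 * d ^ 2) * exp ((1 - g) * (4 * d))).
  { rewrite <- !exp_plus. f_equal. unfold d. ring. }
  assert (E3 : exp (-2 * d ^ 2) * exp ((4 * d) ^ 2 / 8) = 1).
  { rewrite <- exp_plus. replace (-2 * d ^ 2 + (4 * d) ^ 2 / 8) with 0 by field. apply exp_0. }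
  assert (Hh := hoeffding g Hg (4 * d)).
  rewrite E1, E2.
  set (P1 := exp (-2 * g ^ 2)). set (P2 := exp (-2 * (1 - g) ^ 2)). set (E := exp (-2 * d ^ 2)).
  fold E in E3.
  assert (HP : 0 <= P1 * P2 * E).
  { unfold P1, P2, E. assert (H1 := exp_pos (-2 * g ^ 2)). assert (H2 := exp_pos (-2 * (1 - g) ^ 2)).
    assert (H3 := exp_pos (-2 * d ^ 2)). left. apply Rmult_lt_0_compat; [apply Rmult_lt_0_compat|]; assumption. }
  apply Rmult_le_compat_l with (r := P1 * P2 * E) in Hh; [|exact HP].
  replace (P1 * P2 * E * exp ((4 * d) ^ 2 / 8)) with (P1 * P2 * (E * exp ((4 * d) ^ 2 / 8))) in Hh by ring.
  rewrite E3 in Hh. lra.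
Qed.


Section Mix.
Variables (n : nat) (p x : nat -> R).
Hypothesis Hp : forall i, (i < n)%nat -> 0 <= p i.
Hypothesis Hx : forall i, (i < n)%nat -> 0 <= x i <= 1.
Hypothesis Hs : sumR n p = 1.

Let A := sumR n (fun i => p i * exp (-2 * (x i) ^ 2)).
Let B := sumR n (fun i => p i * exp (-2 * (1 - x i) ^ 2)).
Let gam := 1 / 2 - 1 / 4 * ln (A / B).

Lemma A_bounds : exp (-2) <= A.
Proof.
  unfold A. rewrite <- (Rmult_1_r (exp (-2))), <- Hs, <- sumR_scal.
  apply sumR_le. intros i Hi. rewrite Rmult_comm. apply Rmult_le_compat_l; [auto|].
  apply exp_le'. assert (H := Hx i Hi). nra.
Qed.
Lemma B_bounds : exp (-2) <= B.
Proof.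
  unfold B. rewrite <- (Rmult_1_r (exp (-2))), <- Hs, <- sumR_scal.
  apply sumR_le. intros i Hi. rewrite Rmult_comm. apply Rmult_le_compat_l; [auto|].
  apply exp_le'. assert (H := Hx i Hi). nra.
Qed.
Lemma A_pos : 0 < A. Proof. assert (H := exp_pos (-2)). assert (H2 := A_bounds). lra. Qed.
Lemma B_pos : 0 < B. Proof. assert (H := exp_pos (-2)). assert (H2 := B_bounds). lra. Qed.

Lemma AB_ratio : exp (-2) * B <= A <= exp 2 * B.
Proof.
  unfold A, B. rewrite <- !sumR_scal. split; apply sumR_le; intros i Hi; assert (H := Hx i Hi);
    assert (H0 := Hp i Hi).
  - replace (exp (-2 * x i ^ 2)) with (exp (2 - 4 * x i) * exp (-2 * (1 - x i) ^ 2))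
      by (rewrite <- exp_plus; f_equal; ring).
    assert (H4 : exp (-2) <= exp (2 - 4 * x i)) by (apply exp_le'; lra).
    assert (H3 := exp_pos (-2 * (1 - x i) ^ 2)).
    assert (H5 : 0 <= p i * exp (-2 * (1 - x i) ^ 2)) by (apply Rmult_le_pos; lra).
    assert (H6 := Rmult_le_compat_r _ _ _ H5 H4). lra.
  - replace (exp (-2 * x i ^ 2)) with (exp (2 - 4 * x i) * exp (-2 * (1 - x i) ^ 2))
      by (rewrite <- exp_plus; f_equal; ring).
    assert (H4 : exp (2 - 4 * x i) <= exp 2) by (apply exp_le'; lra).
    assert (H3 := exp_pos (-2 * (1 - x i) ^ 2)).
    assert (H5 : 0 <= p i * exp (-2 * (1 - x i) ^ 2)) by (apply Rmult_le_pos; lra).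
    assert (H6 := Rmult_le_compat_r _ _ _ H5 H4). lra.
Qed.

Lemma gam01 : 0 <= gam <= 1.
Proof.
  assert (HA := A_pos). assert (HB := B_pos). destruct AB_ratio as [H1 H2].
  assert (Hq : 0 < A / B) by (apply Rdiv_lt_0_compat; lra).
  assert (L1 : ln (A / B) <= 2).
  { rewrite <- (ln_exp 2). apply ln_le'; [exact Hq|].
    apply Rmult_le_reg_r with B; [lra|]. unfold Rdiv. rewrite Rmult_assoc, Rinv_l by lra. lra. }
  assert (L2 : -2 <= ln (A / B)).
  { rewrite <- (ln_exp (-2)). apply ln_le'; [apply exp_pos|].
    apply Rmult_le_reg_r with B; [lra|]. unfold Rdiv. rewrite Rmult_assoc, Rinv_l by lra. lra. }
  unfold gam. lra.
Qed.

Lemma mix_main : A <= exp (-2 * gam ^ 2) /\ B <= exp (-2 * (1 - gam) ^ 2).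
Proof.
  assert (HA := A_pos). assert (HB := B_pos). assert (Hg := gam01).
  set (P1 := exp (-2 * gam ^ 2)). set (P2 := exp (-2 * (1 - gam) ^ 2)).
  assert (HP1 : 0 < P1) by apply exp_pos. assert (HP2 : 0 < P2) by apply exp_pos.
  set (lam := (1 - gam) * P2). set (mu := gam * P1).
  assert (Hsum : lam * A + mu * B <= P1 * P2).
  { unfold A, B. rewrite <- !sumR_scal, <- sumR_plus.
    apply Rle_trans with (sumR n (fun i => P1 * P2 * p i)).
    - apply sumR_le. intros i Hi. assert (H0 := Hp i Hi).
      assert (T := tangent_pt gam (x i) Hg). fold P1 P2 in T. unfold lam, mu.
      assert (H7 := Rmult_le_compat_l _ _ _ H0 T). lra.
    - rewrite sumR_scal, Hs. lra. }
  assert (Hq : 0 < A / B) by (apply Rdiv_lt_0_compat; lra).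
  assert (Hr : A / B = exp (2 - 4 * gam)).
  { assert (Hl : 2 - 4 * gam = ln (A / B)) by (unfold gam; field). rewrite Hl, exp_ln by exact Hq. reflexivity. }
  assert (HAB : A = B * exp (2 - 4 * gam)).
  { rewrite <- Hr. field. lra. }
  assert (HP : P1 = P2 * exp (2 - 4 * gam)).
  { unfold P1, P2. rewrite <- exp_plus. f_equal. ring. }
  assert (Hc : A * P2 = B * P1) by (rewrite HAB, HP; ring).
  assert (HK : lam * P1 + mu * P2 = P1 * P2) by (unfold lam, mu; ring).
  assert (HKp : 0 < P1 * P2) by (apply Rmult_lt_0_compat; lra).
  split.
  - assert (E : P1 * (lam * A + mu * B) = A * (P1 * P2)).
    { rewrite <- HK. unfold lam, mu. replace (A * ((1 - gam) * P2 * P1 + gam * P1 * P2)) with (P1 * ((1 - gam) * P2 * A) + gam * P1 * (A * P2)) by ring.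
      rewrite Hc. ring. }
    apply Rmult_le_reg_r with (P1 * P2); [exact HKp|].
    rewrite <- E. apply Rmult_le_compat_l; lra.
  - assert (E : P2 * (lam * A + mu * B) = B * (P1 * P2)).
    { rewrite <- HK. unfold lam, mu. replace (B * ((1 - gam) * P2 * P1 + gam * P1 * P2)) with ((1 - gam) * P2 * (B * P1) + P2 * (gam * P1 * B)) by ring.
      rewrite <- Hc. ring. }
    apply Rmult_le_reg_r with (P1 * P2); [exact HKp|].
    rewrite <- E. apply Rmult_le_compat_l; lra.
Qed.

Lemma mix (w : R) : w = 0 \/ w = 1 ->
  (gam - w) ^ 2 <= -1 / 2 * ln (sumR n (fun i => p i * exp (-2 * (x i - w) ^ 2))).
Proof.
  intros Hw. destruct mix_main as [M1 M2]. assert (HA := A_pos). assert (HB := B_pos).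
  destruct Hw as [-> | ->].
  - rewrite (sumR_ext _ _ (fun i => p i * exp (-2 * (x i) ^ 2))) by (intros j _; rewrite Rminus_0_r; reflexivity).
    fold A. apply ln_le' in M1; [|exact HA]. rewrite ln_exp in M1. lra.
  - rewrite (sumR_ext _ _ (fun i => p i * exp (-2 * (1 - x i) ^ 2))) by (intros j _; replace ((x j - 1) ^ 2) with ((1 - x j) ^ 2) by ring; reflexivity).
    fold B. apply ln_le' in M2; [|exact HB]. rewrite ln_exp in M2. 
    replace ((gam - 1) ^ 2) with ((1 - gam) ^ 2) by ring. lra.
Qed.
End Mix.


Lemma lse_tangent n (p x m : nat -> R) :
  (forall i, (i < n)%nat -> 0 <= p i) ->
  0 < sumR n (fun i => p i * exp (-2 * m i)) ->
  -1 / 2 * ln (sumR n (fun i => p i * exp (-2 * x i)))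
  <= -1 / 2 * ln (sumR n (fun i => p i * exp (-2 * m i)))
     + sumR n (fun i => p i * exp (-2 * m i) / sumR n (fun j => p j * exp (-2 * m j)) * (x i - m i)).
Proof.
  intros Hp HZ.
  set (Z := sumR n (fun i => p i * exp (-2 * m i))) in *.
  set (T := sumR n (fun i => p i * exp (-2 * m i) * (x i - m i))).
  assert (HQ : sumR n (fun i => p i * exp (-2 * m i) / Z * (x i - m i)) = T / Z).
  { unfold T, Rdiv. rewrite (Rmult_comm _ (/ Z)), <- sumR_scal. apply sumR_ext. intros; ring. }
  rewrite HQ.
  set (c := -2 * (T / Z)).
  set (S := sumR n (fun i => p i * exp (-2 * x i))).
  assert (HS : exp c * Z <= S).
  { apply Rle_trans with (sumR n (fun i => p i * exp (-2 * m i) * (exp c * (1 + (-2 * (x i - m i)) - c)))).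
    - replace (exp c * Z) with (exp c * ((1 - c) * Z + (-2) * T)).
      2: { unfold c. field. lra. }
      unfold Z, T. rewrite <- !sumR_scal, <- sumR_plus, <- sumR_scal.
      right. apply sumR_ext. intros; ring.
    - apply sumR_le. intros i Hi.
      replace (p i * exp (-2 * x i)) with (p i * exp (-2 * m i) * exp (-2 * (x i - m i)))
        by (rewrite Rmult_assoc, <- exp_plus; f_equal; f_equal; ring).
      apply Rmult_le_compat_l.
      + apply Rmult_le_pos; [auto | left; apply exp_pos].
      + set (z := -2 * (x i - m i)).
        replace (exp z) with (exp c * exp (z - c)) by (rewrite <- exp_plus; f_equal; ring).
        apply Rmult_le_compat_l; [left; apply exp_pos|].
        assert (H := exp_ineq1_le (z - c)). lra. }
  assert (Hc := exp_pos c).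
  assert (HS0 : 0 < S) by (apply Rlt_le_trans with (exp c * Z); [apply Rmult_lt_0_compat|]; lra).
  apply ln_le' in HS; [|apply Rmult_lt_0_compat; lra].
  rewrite ln_mult, ln_exp in HS by lra.
  unfold c in HS. lra.
Qed.


Lemma is_RInt_plusR (f g : R -> R) a b If Ig : is_RInt f a b If -> is_RInt g a b Ig ->
  is_RInt (fun u => f u + g u) a b (If + Ig).
Proof. intros H1 H2. exact (@is_RInt_plus R_NormedModule f g a b If Ig H1 H2). Qed.
Lemma is_RInt_minusR (f g : R -> R) a b If Ig : is_RInt f a b If -> is_RInt g a b Ig ->
  is_RInt (fun u => f u - g u) a b (If - Ig).
Proof. intros H1 H2. exact (@is_RInt_minus R_NormedModule f g a b If Ig H1 H2). Qed.
Lemma is_RInt_scalR (f : R -> R) a b k If : is_RInt f a b If ->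
  is_RInt (fun u => k * f u) a b (k * If).
Proof. intros H1. exact (@is_RInt_scal R_NormedModule f a b k If H1). Qed.
Lemma is_RInt_constR a b (c : R) : is_RInt (fun _ => c) a b ((b - a) * c).
Proof. exact (@is_RInt_const R_NormedModule a b c). Qed.

Lemma is_RInt_sumR n (h : nat -> R -> R) (v : nat -> R) a b :
  (forall i, (i < n)%nat -> is_RInt (h i) a b (v i)) ->
  is_RInt (fun u => sumR n (fun i => h i u)) a b (sumR n v).
Proof.
  induction n; intros H; simpl.
  - assert (H0 := is_RInt_constR a b 0). rewrite Rmult_0_r in H0. exact H0.
  - apply is_RInt_plusR; [apply IHn; intros; apply H; lia | apply H; lia].
Qed.

Lemma sumR_pos_w n (p e : nat -> R) : (forall i, (i < n)%nat -> 0 <= p i) -> 0 < sumR n p ->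
  (forall i, (i < n)%nat -> 0 < e i) -> 0 < sumR n (fun i => p i * e i).
Proof.
  induction n; intros Hp Hs He; simpl in *; [lra|].
  assert (H0 : 0 <= sumR n (fun i => p i * e i)).
  { apply sumR_nonneg. intros i Hi. apply Rmult_le_pos; [apply Hp; lia| left; apply He; lia]. }
  assert (H1 := Hp n ltac:(lia)). assert (H2 := He n ltac:(lia)).
  destruct (Rle_lt_dec (sumR n p) 0) as [Hle|Hlt].
  - assert (0 < p n) by lra. assert (0 < p n * e n) by (apply Rmult_lt_0_compat; lra). lra.
  - assert (0 < sumR n (fun i => p i * e i)) by (apply IHn; [intros; apply Hp; lia | lra | intros; apply He; lia]).
    assert (0 <= p n * e n) by (apply Rmult_le_pos; lra). lra.
Qed.


Lemma round (a b y : R) (n : nat) (p : nat -> R) (F : nat -> R -> R) :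
  a < b -> (0 < n)%nat -> (forall i, (i < n)%nat -> 0 <= p i) -> sumR n p = 1 -> a <= y <= b ->
  (forall i, (i < n)%nat -> forall u v, a <= u -> u <= v -> v <= b -> F i u <= F i v) ->
  (forall i, (i < n)%nat -> forall u, a <= u <= b -> 0 <= F i u <= 1) ->
  CRPS a b (fun u => 1 / 2 - 1 / 4 * ln (sumR n (fun i => p i * exp (-2 * (F i u) ^ 2))
                      / sumR n (fun i => p i * exp (-2 * (1 - F i u) ^ 2)))) y
  <= - (b - a) / 2 * ln (sumR n (fun i => p i * exp (- (2 / (b - a)) * CRPS a b (F i) y))).
Proof.
  intros Hab Hn Hp Hs Hy HFm HF01.
  set (G := fun u => 1 / 2 - 1 / 4 * ln (sumR n (fun i => p i * exp (-2 * (F i u) ^ 2))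
                      / sumR n (fun i => p i * exp (-2 * (1 - F i u) ^ 2)))).
  assert (HG01 : forall u, a <= u <= b -> 0 <= G u <= 1).
  { intros u Hu. exact (gam01 n p (fun i => F i u) Hp (fun i Hi => HF01 i Hi u Hu) Hs). }
  assert (HGm : forall u v, a <= u -> u <= v -> v <= b -> G u <= G v).
  { intros u v Hu Huv Hv.
    assert (Hxu : forall i, (i < n)%nat -> 0 <= F i u <= 1) by (intros; apply HF01; auto; lra).
    assert (Hxv : forall i, (i < n)%nat -> 0 <= F i v <= 1) by (intros; apply HF01; auto; lra).
    assert (HAu := A_pos n p (fun i => F i u) Hp Hxu Hs).
    assert (HAv := A_pos n p (fun i => F i v) Hp Hxv Hs).
    assert (HBu := B_pos n p (fun i => F i u) Hp Hxu Hs).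
    assert (HBv := B_pos n p (fun i => F i v) Hp Hxv Hs).
    cbv beta in HAu, HAv, HBu, HBv.
    set (Au := sumR n (fun i => p i * exp (-2 * (F i u) ^ 2))) in *.
    set (Av := sumR n (fun i => p i * exp (-2 * (F i v) ^ 2))) in *.
    set (Bu := sumR n (fun i => p i * exp (-2 * (1 - F i u) ^ 2))) in *.
    set (Bv := sumR n (fun i => p i * exp (-2 * (1 - F i v) ^ 2))) in *.
    assert (H1 : Av <= Au).
    { apply sumR_le. intros i Hi. apply Rmult_le_compat_l; [auto|]. apply exp_le'.
      assert (H := HFm i Hi u v Hu Huv Hv). assert (H' := Hxu i Hi). nra. }
    assert (H2 : Bu <= Bv).
    { apply sumR_le. intros i Hi. apply Rmult_le_compat_l; [auto|]. apply exp_le'.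
      assert (H := HFm i Hi u v Hu Huv Hv). assert (H' := Hxv i Hi). nra. }
    assert (H3 : Av / Bv <= Au / Bu).
    { unfold Rdiv. apply Rmult_le_compat; try lra.
      - left; apply Rinv_0_lt_compat; lra.
      - apply Rinv_le_contravar; lra. }
    apply ln_le' in H3; [|apply Rdiv_lt_0_compat; lra].
    unfold G. fold Au Av Bu Bv. lra. }
  set (l := fun i u => (F i u - Heav (u - y)) ^ 2).
  assert (Hex : forall i, (i < n)%nat -> ex_RInt (l i) a b).
  { intros i Hi. apply crps_integrable; [exact Hy| apply HFm; auto | apply HF01; auto]. }
  set (L := fun i => RInt (l i) a b).
  set (m := fun i => L i / (b - a)).
  set (Z := sumR n (fun i => p i * exp (-2 * m i))).
  assert (HZ : 0 < Z).
  { apply sumR_pos_w; [exact Hp | lra | intros; apply exp_pos]. }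
  set (q := fun i => p i * exp (-2 * m i) / Z).
  set (Rf := fun u => -1 / 2 * ln Z + sumR n (fun i => q i * (l i u - m i))).
  assert (HRf : is_RInt Rf a b ((b - a) * (-1 / 2 * ln Z) + sumR n (fun i => q i * (L i - (b - a) * m i)))).
  { apply is_RInt_plusR; [apply is_RInt_constR|].
    apply (is_RInt_sumR n (fun i u => q i * (l i u - m i))).
    intros i Hi. apply is_RInt_scalR. apply is_RInt_minusR; [|apply is_RInt_constR].
    apply (RInt_correct (V := R_CompleteNormedModule)). apply Hex; auto. }
  assert (H0 : sumR n (fun i => q i * (L i - (b - a) * m i)) = 0).
  { rewrite (sumR_ext _ _ (fun _ => 0 * 0)). 
    - rewrite sumR_scal. ring.
    - intros i Hi. unfold m. field. lra. }
  rewrite H0, Rplus_0_r in HRf.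
  assert (HZ' : Z = sumR n (fun i => p i * exp (- (2 / (b - a)) * CRPS a b (F i) y))).
  { apply sumR_ext. intros i Hi. unfold m, L, l, CRPS. f_equal. f_equal. field. lra. }
  rewrite <- HZ'.
  fold G.
  unfold CRPS.
  apply Rle_trans with (RInt Rf a b).
  2: { rewrite (is_RInt_unique _ _ _ _ HRf). lra. }
  apply RInt_le; [lra | apply crps_integrable; auto | eexists; exact HRf |].
  intros u Hu.
  assert (Hx : forall i, (i < n)%nat -> 0 <= F i u <= 1) by (intros; apply HF01; auto; lra).
  assert (Hw : Heav (u - y) = 0 \/ Heav (u - y) = 1).
  { unfold Heav. destruct (Rlt_dec (u - y) 0); auto. }
  assert (M := mix n p (fun i => F i u) Hp Hx Hs (Heav (u - y)) Hw).
  assert (T := lse_tangent n p (fun i => l i u) m Hp HZ).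
  eapply Rle_trans; [exact M|]. exact T.
Qed.


Theorem theorem3 (a b : R) (N T : nat) (Fexp : nat -> nat -> R -> R) (y : nat -> R) :
  a < b -> (1 <= N)%nat -> (1 <= T)%nat ->
  (forall i t, (i < N)%nat -> (t < T)%nat -> is_distribution a b (Fexp i t)) ->
  (forall t, (t < T)%nat -> a <= y t <= b) ->
  forall i, (i < N)%nat ->
    sumR T (fun t => CRPS a b (learner a b N Fexp y t) (y t))
    <= sumR T (fun t => CRPS a b (Fexp i t) (y t)) + (b - a) / 2 * ln (INR N).
Proof.
  intros Hab HN HT Hdist Hy i Hi.
  assert (HN0 : 0 < INR N) by (apply lt_0_INR; lia).
  set (eta := 2 / (b - a)).
  assert (Hwpos : forall j t, 0 < weight a b N Fexp y j t).
  { intros j t. induction t; simpl.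
    - apply Rdiv_lt_0_compat; lra.
    - apply Rmult_lt_0_compat; [exact IHt | apply exp_pos]. }
  assert (Hwcl : forall t, weight a b N Fexp y i t
     = 1 / INR N * exp (- eta * sumR t (fun s => CRPS a b (Fexp i s) (y s)))).
  { induction t; simpl.
    - rewrite Rmult_0_r, exp_0. ring.
    - rewrite IHt. fold eta. rewrite Rmult_assoc, <- exp_plus. f_equal. f_equal. ring. }
  set (W := fun t => sumR N (fun j => weight a b N Fexp y j t)).
  assert (HWpos : forall t, 0 < W t).
  { intros t. apply sumR_pos; [lia|]. intros; apply Hwpos. }
  assert (HW0 : W 0%nat = 1).
  { unfold W. simpl. rewrite (sumR_ext _ _ (fun j => 1 / INR N * 1)) by (intros; ring).
    rewrite sumR_scal. 
    assert (Hc : forall k, sumR k (fun _ => 1) = INR k).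
    { induction k; simpl; [reflexivity|]. rewrite IHk. destruct k; simpl; ring. }
    rewrite Hc. field. lra. }
  assert (Hws : forall t, sumR N (fun j => wstar a b N Fexp y j t) = 1).
  { intros t. unfold wstar. unfold Rdiv.
    rewrite (sumR_ext _ _ (fun j => / W t * weight a b N Fexp y j t)) by (intros; unfold W; ring).
    rewrite sumR_scal. fold (W t). field. specialize (HWpos t). lra. }
  assert (HWS : forall t, W (S t) = W t * sumR N (fun j => wstar a b N Fexp y j t
                     * exp (- (2 / (b - a)) * CRPS a b (Fexp j t) (y t)))).
  { intros t. unfold wstar. unfold W at 1. simpl.
    rewrite <- sumR_scal. apply sumR_ext. intros j Hj. fold (W t). field.
    specialize (HWpos t). lra. }
  assert (Hind : forall k, (k <= T)%nat ->
    sumR k (fun t => CRPS a b (learner a b N Fexp y t) (y t)) <= - (b - a) / 2 * ln (W k)).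
  { induction k; intros Hk.
    - simpl. rewrite HW0, ln_1. lra.
    - simpl. 
      assert (IH := IHk ltac:(lia)).
      assert (Hr := round a b (y k) N (fun j => wstar a b N Fexp y j k) (fun j => Fexp j k)
        Hab ltac:(lia)
        (fun j Hj => Rlt_le _ _ (Rdiv_lt_0_compat _ _ (Hwpos j k) (HWpos k)))
        (Hws k) (Hy k ltac:(lia))
        (fun j Hj => proj1 (Hdist j k Hj ltac:(lia)))
        (fun j Hj => proj1 (proj2 (Hdist j k Hj ltac:(lia))))).
      rewrite HWS.
      set (Q := sumR N (fun j => wstar a b N Fexp y j k * exp (- (2 / (b - a)) * CRPS a b (Fexp j k) (y k)))) in *.
      assert (HQ : 0 < Q).
      { unfold Q. apply sumR_pos_w; [ | rewrite Hws; lra | intros; apply exp_pos].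
        intros j Hj. left. apply Rdiv_lt_0_compat; [apply Hwpos | apply HWpos]. }
      rewrite ln_mult by (auto; apply HWpos).
      change (CRPS a b (learner a b N Fexp y k) (y k) <= - (b - a) / 2 * ln Q) in Hr. lra. }
  assert (H := Hind T (Nat.le_refl T)).
  assert (HWT : weight a b N Fexp y i T <= W T).
  { unfold W. apply (sumR_ge_term N (fun j => weight a b N Fexp y j T)); [intros j _; left; apply (Hwpos j T)| exact Hi]. }
  apply ln_le' in HWT; [|apply Hwpos].
  rewrite Hwcl in HWT.
  rewrite ln_mult, ln_exp in HWT by (try apply exp_pos; apply Rdiv_lt_0_compat; lra).
  unfold Rdiv in HWT. rewrite Rmult_1_l, ln_Rinv in HWT by lra.
  set (S := sumR T (fun s => CRPS a b (Fexp i s) (y s))) in *.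
  assert (Hba : 0 < (b - a) / 2) by lra.
  assert (H2 : - (b - a) / 2 * ln (W T) <= (b - a) / 2 * (ln (INR N) + eta * S)).
  { replace (- (b - a) / 2 * ln (W T)) with ((b - a) / 2 * (- ln (W T))) by field.
    apply Rmult_le_compat_l; lra. }
  replace ((b - a) / 2 * (ln (INR N) + eta * S)) with (S + (b - a) / 2 * ln (INR N)) in H2
    by (unfold eta; field; lra).
  lra.
Qed.
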